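(* Let $\mathbf C=(\mathbf C_\tau,q_n^{\mathbf C},\mathsf e_i^{\mathbf C})$ be a finite dimensional clone $\tau$-algebra and $\overline{\mathbf R}_{\mathbf C}$ the clone $\rho_{\mathbf C}$-algebra of $\mathbf C$-representable functions. Then: (i) $\overline{\mathbf R}_{\mathbf C}$ is minimal; (ii) $\mathbf C$ is minimal if and only if $R_{\mathbf C}=\mathrm{Clo}\,\mathbf C_\tau$.
   Context: A clone $\tau$-algebra is an algebra $\mathbf C=(C,\sigma^{\mathbf C}\ (\sigma\in\tau),q_n^{\mathbf C}\ (n\ge0),\mathsf e_i^{\mathbf C}\ (i\ge1))$ with $\mathsf e_i$ nullary, $q_n$ of arity $n+1$, satisfying: (C1) $q_n(\mathsf e_i,x_1,\dots,x_n)=x_i$ ($1\le i\le n$); (C2) $q_n(\mathsf e_j,x_1,\dots,x_n)=\mathsf e_j$ ($j>n$); (C3) $q_n(x,\mathsf e_1,\dots,\mathsf e_n)=x$; (C4) $q_k(x,y_1,\dots,y_k)=q_n(x,y_1,\dots,y_k,\mathsf e_{k+1},\dots,\mathsf e_n)$ ($n>k$); (C5) $q_n(q_n(x,\mathbf y),\mathbf z)=q_n(x,q_n(y_1,\mathbf z),\dots,q_n(y_n,\mathbf z))$; (C6) $q_n(\sigma(x_1,\dots,x_k),\mathbf y)=\sigma(q_n(x_1,\mathbf y),\dots,q_n(x_k,\mathbf y))$ for $\sigma\in\tau$ of arity $k$. $\mathbf C_\tau$ is the $\tau$-reduct. $a$ is independent of $\mathsf e_n$ if $q_n(a,\mathsf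 e_1,\dots,\mathsf e_{n-1},\mathsf e_{n+1})=a$; its dimension is the largest $n$ it depends on ($0$ if none, infinite if infinitely many); finite dimensional means every element has finite dimension. $\mathbf C$ is minimal if $C$ is the smallest subset containing all $\mathsf e_i^{\mathbf C}$ and closed under the operations $\sigma^{\mathbf C}$, $\sigma\in\tau$. A function $f:C^k\to C$ is $\mathbf C$-representable if $f(\mathsf e_1,\dots,\mathsf e_k)$ has dimension $\le k$ and $f(a_1,\dots,a_k)=q_k(f(\mathsf e_1,\dots,\mathsf e_k),a_1,\dots,a_k)$ for all $a_i$; $R_{\mathbf C}$ is the set of them. $\rho_{\mathbf C}$ has an operation symbol $\overline f$ of arity $k$ for each $k$-ary $f\in R_{\mathbf C}$, and $\overline{\mathbf R}_{\mathbf C}=(C,f\ (f\in R_{\mathbf C}),q_n^{\mathbf C},\mathsf e_i^{\mathbf C})$ is a clone $\rho_{\mathbf C}$-algebra. $\mathrm{Clo}\,\mathbf C_\tau$ is the clone of term operations of $\mathbf C_\tau$ (smallest set of finitary operations on $C$, nullary included, containing the projections and the basic operations and closed under composition and under restriction, i.e. dropping a last argument on which the operation does not depend). *)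

(* Defs.v *)
From mathcomp Require Import all_boot.
Set Implicit Arguments. Unset Strict Implicit. Unset Printing Implicit Defensive.

(* Conventions: the constants e_1, e_2, ... of the paper are indexed from 0:
   [e i] stands for the paper's e_{i+1}. *)

Definition ext_by (C : Type) (e : nat -> C) (k n : nat) (ys : 'I_k -> C)
  : 'I_n -> C :=
  fun i => match (insub (val i) : option 'I_k) with
           | Some j => ys j
           | None => e (val i)
           end.

Record CloneAlg (S : Type) (ar : S -> nat) := {
  carrier :> Type;
  sop : forall s : S, ('I_(ar s) -> carrier) -> carrier;
  q : forall n : nat, carrier -> ('I_n -> carrier) -> carrier;
  e : nat -> carrier;
  cl_ax1 : forall n (i : 'I_n) (xs : 'I_n -> carrier),
      q (e (val i)) xs = xs i;
  cl_ax2 : forall n j (xs : 'I_n -> carrier), n <= j -> q (e j) xs = e j;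
  cl_ax3 : forall n x, q x (fun i : 'I_n => e (val i)) = x;
  cl_ax4 : forall k n x (ys : 'I_k -> carrier), k < n ->
      q x ys = q x (@ext_by carrier e k n ys);
  cl_ax5 : forall n x (ys zs : 'I_n -> carrier),
      q (q x ys) zs = q x (fun i => q (ys i) zs);
  cl_ax6 : forall n s (xs : 'I_(ar s) -> carrier) (ys : 'I_n -> carrier),
      q (sop xs) ys = sop (fun j => q (xs j) ys)
}.

Arguments CloneAlg : clear implicits.
Arguments sop {S ar} c s _.
Arguments q {S ar} c n _ _.
Arguments e {S ar} c _.

Section Defs.
Variables (S : Type) (ar : S -> nat) (A : CloneAlg S ar).

(* a is independent of the paper's e_{m+1}:
   q_{m+1}(a, e_1, ..., e_m, e_{m+2}) = a *)
Definition independent (a : A) (m : nat) : Prop :=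
  q A m.+1 a (fun i : 'I_m.+1 => if val i < m then e A (val i) else e A m.+1) = a.

(* dimension of a is <= k : a is independent of every e_n with n > k
   (paper indexing), i.e. of every e A m with m >= k *)
Definition dim_le (a : A) (k : nat) : Prop :=
  forall m, k <= m -> independent a m.

Definition finite_dimensional : Prop := forall a : A, exists k, dim_le a k.

Definition representable (k : nat) (f : ('I_k -> A) -> A) : Prop :=
  dim_le (f (fun i => e A (val i))) k /\
  forall xs : 'I_k -> A, f xs = q A k (f (fun i => e A (val i))) xs.

Definition rho_sym : Type :=
  {p : {k : nat & ('I_k -> A) -> A} | representable (projT2 p)}.
Definition rho_ar (s : rho_sym) : nat := projT1 (sval s).
Definition rho_op (s : rho_sym) : ('I_(rho_ar s) -> A) -> A := projT2 (sval s).

Inductive inClo : forall k : nat, (('I_k -> A) -> A) -> Prop :=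
  | clo_proj : forall n (i : 'I_n), inClo (fun xs : 'I_n -> A => xs i)
  | clo_basic : forall s : S, inClo (sop A s)
  | clo_comp : forall k n (f : ('I_k -> A) -> A) (g : 'I_k -> ('I_n -> A) -> A),
      inClo f -> (forall j, inClo (g j)) ->
      inClo (fun xs : 'I_n -> A => f (fun j => g j xs))
  | clo_restr : forall n (f : ('I_n.+1 -> A) -> A) (c : A),
      inClo f ->
      (forall xs ys : 'I_n.+1 -> A,
          (forall i : 'I_n.+1, val i < n -> xs i = ys i) -> f xs = f ys) ->
      inClo (fun xs : 'I_n -> A =>
               f (fun i : 'I_n.+1 => if unlift ord_max i is Some j then xs j else c)).

End Defs.

Inductive generated (C : Type) (e0 : nat -> C) (T : Type) (art : T -> nat)
    (ops : forall t : T, ('I_(art t) -> C) -> C) : C -> Prop :=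
  | gen_e : forall i, generated e0 ops (e0 i)
  | gen_op : forall t (xs : 'I_(art t) -> C),
      (forall j, generated e0 ops (xs j)) -> generated e0 ops (ops t xs).

Definition minimal_wrt (C : Type) (e0 : nat -> C) (T : Type) (art : T -> nat)
    (ops : forall t : T, ('I_(art t) -> C) -> C) : Prop :=
  forall x : C, generated e0 ops x.

Definition minimal (S : Type) (ar : S -> nat) (A : CloneAlg S ar) : Prop :=
  minimal_wrt (e A) (sop A).

Definition Rbar_minimal (S : Type) (ar : S -> nat) (A : CloneAlg S ar) : Prop :=
  minimal_wrt (e A) (@rho_op S ar A).

(* Main.v *)
Require Import Defs.
From mathcomp Require Import all_boot.
From mathcomp Require Import zify.
From Stdlib Require Import FunctionalExtensionality ClassicalEpsilon.
Set Implicit Arguments. Unset Strict Implicit.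

Section Aux.
Variables (S : Type) (ar : S -> nat) (A : CloneAlg S ar).

Definition qq n (a : A) (ws : nat -> A) : A := q A n a (fun i : 'I_n => ws (val i)).
Definition lst k (xs : 'I_k -> A) : nat -> A :=
  fun i => match (insub i : option 'I_k) with Some j => xs j | None => e A i end.

Lemma lst_val k (xs : 'I_k -> A) (j : 'I_k) : lst xs (val j) = xs j.
Proof. by rewrite /lst valK. Qed.

Lemma lst_lt k (xs : 'I_k -> A) i (h : i < k) : lst xs i = xs (Ordinal h).
Proof. by rewrite -[i]/(val (Ordinal h)) lst_val. Qed.

Lemma q_qq n a (xs : 'I_n -> A) : q A n a xs = qq n a (lst xs).
Proof. rewrite /qq; f_equal; apply: functional_extensionality => i.
by rewrite lst_val. Qed.

Lemma eq_qq n a ws vs : (forall i, i < n -> ws i = vs i) -> qq n a ws = qq n a vs.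
Proof. move=> H; rewrite /qq; f_equal; apply: functional_extensionality => i.
exact: (H _ (ltn_ord i)). Qed.

Lemma qq_e_lt n i ws : i < n -> qq n (e A i) ws = ws i.
Proof. move=> h; rewrite /qq -[i]/(val (Ordinal h)) cl_ax1 //. Qed.

Lemma qq_e_ge n i ws : n <= i -> qq n (e A i) ws = e A i.
Proof. move=> h; rewrite /qq cl_ax2 //. Qed.

Lemma qq_e n a : qq n a (e A) = a.
Proof. by rewrite /qq cl_ax3. Qed.

Lemma qq_C5 n a ys zs : qq n (qq n a ys) zs = qq n a (fun i => qq n (ys i) zs).
Proof. by rewrite /qq cl_ax5. Qed.

Lemma qq_C4 k n a ws : k <= n ->
  qq k a ws = qq n a (fun i => if i < k then ws i else e A i).
Proof.
rewrite leq_eqVlt => /orP [/eqP <-|lt].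
  by apply: eq_qq => i ->.
rewrite /qq (cl_ax4 _ _ lt); f_equal; apply: functional_extensionality => i.
rewrite /ext_by; case: insubP => [j -> vj|/negbTE ->] //; by rewrite vj.
Qed.

Lemma qq_sop n s (xs : 'I_(ar s) -> A) ws :
  qq n (sop A s xs) ws = sop A s (fun j => qq n (xs j) ws).
Proof. by rewrite /qq cl_ax6. Qed.

Definition upd (ws : nat -> A) m z := fun i => if i == m then z else ws i.

Lemma indepE a m : independent a m <->
  qq m.+1 a (fun i => if i < m then e A i else e A m.+1) = a.
Proof. by []. Qed.

Lemma claim a m ws : independent a m ->
  qq m.+1 a ws = qq m.+1 a (upd ws m (e A m.+1)).
Proof.
move/indepE=> H; rewrite -{1}H qq_C5; apply: eq_qq => i lti.
rewrite /upd; case: ifP => [im|].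
  by rewrite qq_e_lt // (ltn_eqF im).
move=> /negbT; rewrite -leqNgt => mi.
have -> : i = m by apply/eqP; rewrite eqn_leq mi -ltnS lti.
by rewrite eqxx qq_e_ge.
Qed.

Lemma lift1 a m vs : independent a m.+1 -> qq m.+2 a vs = qq m.+1 a vs.
Proof.
move=> H; rewrite (claim _ H) [RHS](qq_C4 a vs (leqnSn m.+1)) [RHS](claim _ H).
apply: eq_qq => i lti; rewrite /upd; case: eqP => // im.
have h : i < m.+1 by lia.
by rewrite h.
Qed.

Lemma keyz a m w z : independent a m -> independent a m.+1 ->
  qq m.+1 a (upd w m z) = qq m.+2 a (fun i => if i < m then w i else w m.+1).
Proof.
move=> H0 H1; rewrite -(lift1 _ H1).
move/indepE: (H0) => E; rewrite -(lift1 _ H1) in E.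
rewrite -{1}E qq_C5; apply: eq_qq => i lti.
case: ifP => im; first by rewrite qq_e_lt ?(ltn_trans im) // /upd (ltn_eqF im).
by rewrite qq_e_lt // /upd (gtn_eqF (ltnSn m)).
Qed.

Lemma L1step a m ws : independent a m -> independent a m.+1 ->
  qq m.+1 a ws = qq m a ws.
Proof.
move=> H0 H1.
pose w := fun i => if i < m then ws i else e A i.
have -> : qq m.+1 a ws = qq m.+1 a (upd w m (ws m)).
  apply: eq_qq => i lti; rewrite /upd /w; case: eqP => [->//|im].
  have h : i < m by lia.
  by rewrite h.
rewrite (keyz w (ws m) H0 H1) (qq_C4 a ws (leqnSn m)) -(keyz w (e A m) H0 H1).
apply: eq_qq => i lti; rewrite /upd /w; case: eqP => [->|im]; first by rewrite ltnn.
by [].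
Qed.

Lemma L1 a k n ws : dim_le a k -> k <= n -> qq n a ws = qq k a ws.
Proof.
move=> D; elim: n => [|n IH]; first by rewrite leqn0 => /eqP ->.
rewrite leq_eqVlt => /orP [/eqP -> //|]; rewrite ltnS => kn.
by rewrite L1step ?IH //; apply: D => //; apply: leqW.
Qed.

Lemma GC5 (a : A) k n (bs : nat -> A) xs : dim_le a k -> (forall i, i < k -> dim_le (bs i) n) ->
  qq n (qq k a bs) xs = qq k a (fun i => qq n (bs i) xs).
Proof.
move=> Da Db.
have kM : k <= maxn k n by apply: leq_maxl.
have nM : n <= maxn k n by apply: leq_maxr.
rewrite -(L1 bs Da kM) (qq_C4 _ xs nM) qq_C5 (L1 _ Da kM).
apply: eq_qq => i ik; rewrite (L1 _ (Db i ik) nM).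
by apply: eq_qq => j jn; rewrite jn.
Qed.

Lemma dim_mono (a : A) k n : dim_le a k -> k <= n -> dim_le a n.
Proof. by move=> D kn m nm; apply: D; apply: leq_trans nm. Qed.

Lemma DC (a : A) k n (bs : nat -> A) : dim_le a k -> (forall i, i < k -> dim_le (bs i) n) ->
  dim_le (qq k a bs) n.
Proof.
move=> Da Db m nm; apply/indepE.
rewrite GC5 //; last by move=> i ik; apply: dim_mono (Db i ik) _; apply: leqW.
apply: eq_qq => i ik; rewrite (L1 _ (Db i ik) (leqW nm)) -[RHS](qq_e n (bs i)).
apply: eq_qq => j jn; by rewrite (leq_trans jn nm).
Qed.

Definition Fl n (xs : 'I_n -> A) (c : A) : 'I_n.+1 -> A :=
  fun i => if unlift ord_max i is Some j then xs j else c.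

Lemma Fl_lt n xs c (i : 'I_n.+1) : val i < n -> Fl xs c i = lst xs (val i).
Proof.
rewrite /Fl; case: unliftP => [j ->|->]; last by rewrite /= ltnn.
move=> _; have -> : val (lift ord_max j) = val j by exact: lift_max.
by rewrite lst_val.
Qed.

Lemma indep_q (a : A) n (xs ys : 'I_n.+1 -> A) : dim_le a n ->
  (forall i : 'I_n.+1, val i < n -> xs i = ys i) -> q A n.+1 a xs = q A n.+1 a ys.
Proof.
move=> D H; rewrite !q_qq !(L1 _ D (leqnSn n)); apply: eq_qq => i lti.
have h : i < n.+1 by apply: leqW.
by rewrite !(lst_lt _ h) H.
Qed.

Lemma restr_q (a : A) n (xs : 'I_n -> A) c : dim_le a n -> q A n.+1 a (Fl xs c) = q A n a xs.
Proof.
move=> D; rewrite !q_qq (L1 _ D (leqnSn n)); apply: eq_qq => i lti.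
have h : i < n.+1 by apply: leqW.
by rewrite (lst_lt _ h) Fl_lt.
Qed.

Notation E n := (fun i : 'I_n => e A (val i)).

Lemma clo_big (a : A) : generated (e A) (sop A) a ->
  exists N, forall n, N <= n -> inClo (fun xs : 'I_n -> A => q A n a xs).
Proof.
elim=> [i|t xs _ IH].
  exists i.+1 => n h.
  have -> : (fun xs : 'I_n -> A => q A n (e A i) xs) = (fun xs => xs (Ordinal h)).
    by apply: functional_extensionality => xs; rewrite -[i]/(val (Ordinal h)) cl_ax1.
  exact: clo_proj.
pose Nf j := proj1_sig (constructive_indefinite_description _ (IH j)).
have HN j : forall n, Nf j <= n -> inClo (fun ys : 'I_n -> A => q A n (xs j) ys).
  exact: (proj2_sig (constructive_indefinite_description _ (IH j))).
exists (\max_j Nf j) => n hn.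
have -> : (fun ys : 'I_n -> A => q A n (sop A t xs) ys) =
   (fun ys => sop A t (fun j => (fun j ys => q A n (xs j) ys) j ys)).
  by apply: functional_extensionality => ys; rewrite cl_ax6.
apply: clo_comp; first exact: clo_basic.
move=> j; apply: HN; apply: leq_trans hn; exact: leq_bigmax.
Qed.

Lemma restrict_down (a : A) k d : dim_le a k ->
  inClo (fun xs : 'I_(k + d) -> A => q A (k + d) a xs) ->
  inClo (fun xs : 'I_k -> A => q A k a xs).
Proof.
move=> D; elim: d => [|d IH]; first by rewrite addn0.
rewrite addnS => C; apply: IH.
have Dn : dim_le a (k + d) by apply: dim_mono D _; apply: leq_addr.
have -> : (fun xs : 'I_(k + d) -> A => q A (k + d) a xs) =
  (fun xs => (fun ys => q A (k + d).+1 a ys)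
     (fun i => if unlift ord_max i is Some j then xs j else e A 0)).
  by apply: functional_extensionality => xs; rewrite -/(Fl xs (e A 0)) restr_q.
apply: clo_restr => // xs ys H; exact: indep_q.
Qed.

Lemma gen_clo k (f : ('I_k -> A) -> A) : inClo f ->
  forall xs, (forall i, generated (e A) (sop A) (xs i)) -> generated (e A) (sop A) (f xs).
Proof.
elim=> {k f} [n i|t|k n f g _ IHf _ IHg|n f c _ IHf Hind] xs Hx.
- exact: Hx.
- exact: gen_op.
- apply: IHf => j; exact: IHg.
- rewrite (Hind _ (fun i => if unlift ord_max i is Some j then xs j else e A 0)).
    apply: IHf => i; case: (unlift ord_max i) => [j|]; [exact: Hx | exact: gen_e].
  move=> i lti; move: lti; case: unliftP => [j _ _ //|-> /=]; by rewrite ltnn.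
Qed.

Lemma rep_clo k (f : ('I_k -> A) -> A) : inClo f -> representable f.
Proof.
elim=> {k f} [n i|t|k n f g _ [Df Hf] _ IHg|n f c _ [Df Hf] Hind].
- split => [m nm|xs] /=; last by rewrite cl_ax1.
  apply/indepE; rewrite qq_e_lt; last by rewrite ltnS; apply: leq_trans (ltnW (ltn_ord i)) nm.
  by rewrite (leq_trans (ltn_ord i) nm).
- split => [m nm|xs] /=.
    apply/indepE; rewrite qq_sop; f_equal; apply: functional_extensionality => j.
    have jm : val j < m by apply: leq_trans (ltn_ord j) nm.
    by rewrite qq_e_lt ?jm //; apply: leqW.
  rewrite cl_ax6; f_equal; apply: functional_extensionality => j; by rewrite cl_ax1.
- split => [|xs] /=.
    rewrite Hf q_qq; apply: DC => // i ik; rewrite (lst_lt _ ik); exact: (IHg _).1.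
  rewrite [f (fun j => g j xs)]Hf [f (fun j => g j _)]Hf !q_qq GC5 //; last first.
    move=> i ik; rewrite (lst_lt _ ik); exact: (IHg _).1.
  by apply: eq_qq => i ik; rewrite !(lst_lt _ ik) (IHg _).2 q_qq.
- change (representable (fun xs : 'I_n -> A => f (Fl xs c))).
  have qqa ws : qq n.+1 (f (E n.+1)) ws = f (fun i => ws (val i)) by rewrite /qq -Hf.
  have Da : dim_le (f (E n.+1)) n.
    move=> m; rewrite leq_eqVlt => /orP [/eqP <-|nm]; last exact: Df.
    apply/indepE; rewrite qqa; apply: Hind => i lti; by rewrite lti.
  have FE : f (Fl (E n) c) = f (E n.+1).
    by apply: Hind => i lti; rewrite Fl_lt // (lst_lt _ lti).
  split => [|xs] /=; rewrite FE //.
  by rewrite [f (Fl xs c)]Hf restr_q.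
Qed.

End Aux.

Theorem proposition11p12 (S : Type) (ar : S -> nat) (A : CloneAlg S ar) :
  finite_dimensional A ->
  Rbar_minimal A /\
  (minimal A <-> (forall (k : nat) (f : ('I_k -> A) -> A),
                     representable f <-> inClo f)).
Proof.
move=> FD; split.
  move=> x; case: (FD x) => k Dk.
  have R : representable (fun xs : 'I_k -> A => q A k x xs).
    by split => [|xs] /=; rewrite cl_ax3.
  pose s : rho_sym A := exist _ (existT _ k (fun xs : 'I_k -> A => q A k x xs)) R.
  have -> : x = @rho_op S ar A s (fun i => e A (val i)) by rewrite /rho_op /= cl_ax3.
  by apply: gen_op => j; apply: gen_e.
split.
  move=> Min k f; split; last exact: rep_clo.
  case=> Dk Hf.
  have -> : f = (fun xs => q A k (f (fun i => e A (val i))) xs).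
    by apply: functional_extensionality => xs; rewrite Hf.
  have [N HN] := clo_big (Min (f (fun i => e A (val i)))).
  apply: (@restrict_down _ _ _ _ _ (N - k) Dk); apply: HN; lia.
move=> H x; case: (FD x) => k Dk.
have R : representable (fun xs : 'I_k -> A => q A k x xs).
  by split => [|xs] /=; rewrite cl_ax3.
have C := (H k _).1 R.
have := gen_clo C (xs := fun i => e A (val i)) (fun i => gen_e _ _ _).
by rewrite cl_ax3.
Qed.
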